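(* Let $k\geq 3$ and consider the single braided Coxeter group $W^3_k$ with generators $s_1,s_2,s_3$. For all $\lambda\in\mathbb{N}_0$ and $1\le r\le 3$, \[ l_R(\omega((s_1s_2s_3)^\lambda s_1\cdots s_r))\leq \lambda+r-2\left\lfloor\frac{\lambda+\mathbf{1}_{r\geq2}}{k}\right\rfloor. \]
   Context: $W^n_k=\langle s_1,\dots,s_n\mid s_i^2=(s_is_j)^{k}=1\ \forall i\neq j\rangle$. $\omega$ maps a word over $\{s_1,\dots,s_n\}$ to the element it represents. $l_R$ is the reflection length: minimal number of reflections (conjugates of generators) whose product is the element. $\mathbf{1}_{r\ge2}$ is $1$ if $r\ge2$ and $0$ otherwise; $s_1\cdots s_r$ denotes the product of the first $r$ generators. *)

(* Defs.v *)
From mathcomp Require Import all_boot.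
From mathcomp Require Import boolp.
Set Implicit Arguments. Unset Strict Implicit. Unset Printing Implicit Defensive.

(* Words over the generators s_1..s_n, with s_(i+1) encoded as the ordinal i : 'I_n. *)
Definition word (n : nat) := seq 'I_n.

(* The congruence on words generated by the defining relations of
   W^n_k = < s_1..s_n | s_i^2 = (s_i s_j)^k = 1  (i <> j) >.
   Two words are related iff they represent the same element of W^n_k,
   i.e. omega u = omega v.  (Since all generators are involutions, the
   monoid presented by these relations is the group W^n_k.) *)
Inductive wequiv (n k : nat) : word n -> word n -> Prop :=
  | we_refl (u : word n) : @wequiv n k u u
  | we_sym (u v : word n) : @wequiv n k u v -> @wequiv n k v u
  | we_trans (u v w : word n) : @wequiv n k u v -> @wequiv n k v w -> @wequiv n k u w
  | we_ctx (a b u v : word n) : @wequiv n k u v -> @wequiv n k (a ++ u ++ b) (a ++ v ++ b)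
  | we_sq (i : 'I_n) : @wequiv n k [:: i; i] [::]
  | we_braid (i j : 'I_n) : i != j -> @wequiv n k (flatten (nseq k [:: i; j])) [::].

(* A word representing a reflection: a conjugate w s_i w^{-1} of a generator
   (in W^n_k, w^{-1} is represented by rev w). *)
Definition is_reflection_word (n : nat) (t : word n) : Prop :=
  exists (w : word n) (i : 'I_n), t = w ++ [:: i] ++ rev w.

Definition refl_fact (n k : nat) (u : word n) (m : nat) : Prop :=
  exists ts : seq (word n),
    size ts = m /\ (forall t, t \in ts -> is_reflection_word t) /\
    wequiv k (flatten ts) u.

Lemma refl_fact_exists (n k : nat) (u : word n) :
  exists m, (fun m => `[< refl_fact k u m >]) m.
Proof.
exists (size u); apply/asboolP.
exists [seq [:: i] | i <- u]; split; first by rewrite size_map.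
split.
  move=> t /mapP [i _ ->]; by exists [::], i.
have -> : flatten [seq [:: i] | i <- u] = u by elim: u => //= i u ->.
exact: we_refl.
Qed.

Definition lR (n k : nat) (u : word n) : nat := ex_minn (refl_fact_exists k u).

Definition s123 : word 3 := [:: inord 0; inord 1; inord 2].

(* Main.v *)
Require Import Defs.
From mathcomp Require Import all_boot.
From mathcomp Require Import boolp.
From mathcomp Require Import zify.

Section Gen.
Variables (n k : nat).
Implicit Types (u v x y : word n).

Lemma eq_equiv u v : u = v -> wequiv k u v.
Proof. by move=> ->; apply: we_refl. Qed.

Lemma cat_equiv u u' v v' : wequiv k u u' -> wequiv k v v' -> wequiv k (u ++ v) (u' ++ v').
Proof.
move=> H1 H2; apply: we_trans (_ : wequiv k (u' ++ v) _).
  have := we_ctx [::] v H1; by rewrite /= .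
have := we_ctx u' [::] H2; by rewrite /= !cats0.
Qed.

Lemma revx_equiv x : wequiv k (rev x ++ x) [::].
Proof.
elim: x => [|a x IH]; first exact: we_refl.
rewrite rev_cons -cats1.
apply: we_trans IH.
apply: we_trans (_ : wequiv k (rev x ++ [::] ++ x) _); last exact: eq_equiv.
apply: we_trans (we_ctx (rev x) x (we_sq k a)).
by apply: eq_equiv; rewrite -!catA.
Qed.

Lemma xrev_equiv x : wequiv k (x ++ rev x) [::].
Proof. by have := revx_equiv (rev x); rewrite revK. Qed.

Lemma rf_equiv u v m : refl_fact k u m -> wequiv k u v -> refl_fact k v m.
Proof.
move=> [ts [H1 [H2 H3]]] E; exists ts; split => //; split => //.
exact: we_trans E.
Qed.

Lemma conj_flat x (ts : seq (word n)) :
  wequiv k (flatten (map (fun t => x ++ t ++ rev x) ts)) (x ++ flatten ts ++ rev x).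
Proof.
elim: ts => [|t ts IH] /=.
  by apply: we_sym; apply: xrev_equiv.
apply: we_trans (_ : wequiv k ((x ++ t ++ rev x) ++ (x ++ flatten ts ++ rev x)) _).
  exact: cat_equiv (we_refl _ _) IH.
apply: we_trans (_ : wequiv k ((x ++ t) ++ (rev x ++ x) ++ (flatten ts ++ rev x)) _).
  by apply: eq_equiv; rewrite -!catA.
have HH := (we_ctx (x ++ t) (flatten ts ++ rev x) (revx_equiv x)). apply: (we_trans HH).
by apply: eq_equiv; rewrite -!catA.
Qed.

Lemma rf_sandwich x u y m1 m2 :
  refl_fact k u m1 -> refl_fact k (x ++ y) m2 -> refl_fact k (x ++ u ++ y) (m1 + m2).
Proof.
move=> [ts1 [S1 [R1 E1]]] [ts2 [S2 [R2 E2]]].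
exists (map (fun t => x ++ t ++ rev x) ts1 ++ ts2); split.
  by rewrite size_cat size_map S1 S2.
split.
  move=> t; rewrite mem_cat => /orP [/mapP [t0 /R1 [w [i ->]] ->]|/R2 //].
  exists (x ++ w), i; by rewrite rev_cat -!catA.
rewrite flatten_cat.
apply: we_trans (_ : wequiv k ((x ++ u ++ rev x) ++ (x ++ y)) _).
  apply: cat_equiv E2; apply: we_trans (conj_flat x ts1) _.
  have := we_ctx x (rev x) E1; by [].
apply: we_trans (_ : wequiv k ((x ++ u) ++ (rev x ++ x) ++ y) _).
  by apply: eq_equiv; rewrite -!catA.
have HH := we_ctx (x ++ u) y (revx_equiv x). apply: (we_trans HH).
by apply: eq_equiv; rewrite -!catA.
Qed.

Lemma rf_letter (i : 'I_n) : refl_fact k [:: i] 1.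
Proof.
exists [:: [:: i]]; split => //; split; last exact: we_refl.
by move=> t; rewrite inE => /eqP ->; exists [::], i.
Qed.

Lemma rf_nil u : wequiv k [::] u -> refl_fact k u 0.
Proof.
move=> E; exists [::]; split => //; split => //.
Qed.

Lemma rf_del x (i : 'I_n) y m : refl_fact k (x ++ y) m -> refl_fact k (x ++ [:: i] ++ y) (m.+1).
Proof. move=> H; have := @rf_sandwich x [:: i] y 1 m (rf_letter i) H; by rewrite add1n. Qed.

Lemma lR_le u m : refl_fact k u m -> lR k u <= m.
Proof.
move=> H; rewrite /lR; case: ex_minnP => m0 _ Hmin; apply: Hmin.
exact/asboolP.
Qed.

End Gen.

Lemma F_S (T : Type) (s : seq T) m : flatten (nseq m.+1 s) = flatten (nseq m s) ++ s.
Proof. elim: m => [|m IH]; first by rewrite /= cats0. change (s ++ flatten (nseq m.+1 s) = (s ++ flatten (nseq m s)) ++ s). by rewrite IH catA. Qed.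

Lemma F_add (T : Type) (s : seq T) m p :
  flatten (nseq (m + p) s) = flatten (nseq m s) ++ flatten (nseq p s).
Proof. elim: m => [|m IH] //=; by rewrite IH catA. Qed.

Lemma F_rot (T : Type) (x y : seq T) m :
  x ++ flatten (nseq m (y ++ x)) = flatten (nseq m (x ++ y)) ++ x.
Proof. elim: m => [|m IH]; first by rewrite /= cats0. change (x ++ ((y ++ x) ++ flatten (nseq m (y ++ x))) = ((x ++ y) ++ flatten (nseq m (x ++ y))) ++ x). by rewrite -[RHS]catA -IH !catA. Qed.

Section Words.
Variable k : nat.
Hypothesis hk : 3 <= k.

Lemma delc (a b c : 'I_3) p : forall (x y : word 3) m,
  refl_fact k (x ++ flatten (nseq p [:: a; b]) ++ y) m ->
  refl_fact k (x ++ flatten (nseq p [:: a; b; c]) ++ y) (p + m).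
Proof.
elim: p => [|p IH] x y m H //=.
have := IH (x ++ [:: a; b]) y m.
rewrite -!catA /= => /(_ H) H2.
have H3 : refl_fact k ((x ++ [:: a; b]) ++ (flatten (nseq p [:: a; b; c]) ++ y)) (p + m)
  by rewrite -catA.
have := @rf_del 3 k _ c _ _ H3.
by rewrite -!catA /= addSn.
Qed.

Lemma altk (a b : 'I_3) : a != b -> refl_fact k (flatten (nseq k [:: a; b])) 0.
Proof. by move=> ab; apply: rf_nil; apply: we_sym; apply: we_braid. Qed.

Lemma Tlem (a b c : 'I_3) : a != b -> forall M,
  refl_fact k (flatten (nseq (k.-1 + M * k) [:: a; b; c]) ++ [:: a; b]) (k.-1 + M * (k - 2)).
Proof.
move=> ab; elim => [|M IH].
  rewrite !mul0n !addn0.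
  have := @delc a b c k.-1 [::] [:: a; b] 0.
  rewrite !cat0s addn0; apply.
  have -> : flatten (nseq k.-1 [:: a; b]) ++ [:: a; b] = flatten (nseq k [:: a; b]).
    by rewrite -F_S prednK //; lia.
  exact: altk.
have E : k.-1 + M.+1 * k = (k - 2) + (1 + ((k.-1 + M * k) + 1)).
  rewrite mulSn; lia.
rewrite E (F_add _ _ (k - 2)) (F_add _ _ 1) (F_add _ _ (k.-1 + M * k) 1).
set X := flatten (nseq (k.-1 + M * k) _).
have -> : (flatten (nseq (k - 2) [:: a; b; c]) ++ flatten (nseq 1 [:: a; b; c]) ++ (X ++
   flatten (nseq 1 [:: a; b; c]))) ++ [:: a; b] =
   (flatten (nseq (k - 2) [:: a; b; c]) ++ [:: a; b; c]) ++ (X ++ [:: a; b]) ++ [:: c; a; b].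
  by rewrite /= ?cats0 -!catA; congr (_ ++ _); rewrite /= -catA.
have -> : k.-1 + M.+1 * (k - 2) = (k.-1 + M * (k - 2)) + (k - 2) by rewrite mulSn; lia.
apply: rf_sandwich => //.
have H0 : refl_fact k (flatten (nseq (k - 2) [:: a; b]) ++ [:: a; b] ++ [:: a; b]) 0.
  have -> : flatten (nseq (k - 2) [:: a; b]) ++ [:: a; b] ++ [:: a; b] = flatten (nseq k [:: a; b]).
    rewrite catA -F_S -F_S; congr (flatten (nseq _ _)); lia.
  exact: altk.
have := @delc a b c (k - 2) [::] ([:: a; b] ++ [:: a; b]) 0 H0.
rewrite addn0 => H1; apply: rf_equiv H1 _.
rewrite cat0s -!catA.
have HH := we_ctx (flatten (nseq (k - 2) [:: a; b; c]) ++ [:: a; b]) [:: a; b] (we_sq k c).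
apply: we_sym; apply: we_trans (_ : wequiv k ((flatten (nseq (k - 2) [:: a; b; c]) ++ [:: a; b]) ++ [:: c; c] ++ [:: a; b]) _).
  by apply: eq_equiv; rewrite -!catA.
apply: (we_trans HH); apply: eq_equiv; by rewrite -!catA.
Qed.

Lemma Glem n : forall (a b c : 'I_3), a != b -> b != c -> c != a ->
  exists m, refl_fact k (flatten (nseq n [:: a; b; c]) ++ [:: a; b]) m /\
            m + 2 * (n.+1 %/ k) <= n.+2.
Proof.
elim: n => [|n IH] a b c ab bc ca.
  exists 2; split.
    have := @rf_del 3 k [::] a [:: b] 1 (@rf_letter 3 k b); by [].
  rewrite divn_small //; lia.
case: (boolP (k %| n.+2)) => [/dvdnP [[|M] HQ]|nd].
- by rewrite mul0n in HQ.
- have En : n.+1 = k.-1 + M * k by move: HQ; rewrite mulSn; lia.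
  exists (k.-1 + M * (k - 2)); split.
    rewrite En; exact: Tlem.
  rewrite HQ mulnK; last lia.
  move: HQ; rewrite mulSn mulnBr; nia.
- have [m [H Hb]] := IH c a b ca ab bc.
  exists m.+1; split.
    have E : flatten (nseq n.+1 [:: a; b; c]) ++ [:: a; b] =
      [:: a; b] ++ (flatten (nseq n [:: c; a; b]) ++ [:: c; a]) ++ [:: b].
      have R : [:: a; b] ++ flatten (nseq n [:: c; a; b]) = flatten (nseq n [:: a; b; c]) ++ [:: a; b]
        := F_rot _ [:: a; b] [:: c] n.
      by rewrite F_S !catA R -!catA.
    rewrite E -[m.+1]addn1; apply: (@rf_sandwich 3 k [:: a; b] _ [:: b] m 1 H).
    apply: (@rf_equiv 3 k [:: a] _ 1 (@rf_letter 3 k a)).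
    have HH := we_ctx [:: a] [::] (we_sq k b).
    by apply: we_sym; move: HH.
  rewrite (divnS n.+1) ?(negbTE nd) ?add0n; last lia.
  lia.
Qed.

End Words.

Theorem mainTheorem13 (k : nat) (hk : 3 <= k) (lam r : nat) (hr1 : 1 <= r) (hr3 : r <= 3) :
  lR k (flatten (nseq lam s123) ++ take r s123) + 2 * ((lam + (2 <= r)) %/ k) <= lam + r.
Proof.
rewrite /s123.
set a : 'I_3 := inord 0; set b : 'I_3 := inord 1; set c : 'I_3 := inord 2.
have ab : a != b by apply/eqP => /(f_equal val); rewrite /= !inordK.
have bc : b != c by apply/eqP => /(f_equal val); rewrite /= !inordK.
have ca : c != a by apply/eqP => /(f_equal val); rewrite /= !inordK.
case: r hr1 hr3 => [|[|[|[|r]]]] // _ _.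
- case: lam => [|n].
    rewrite /= div0n muln0 addn0.
    exact: (@lR_le 3 k _ _ (@rf_letter 3 k a)).
  have [m [H Hb]] := Glem k hk n b c a bc ca ab.
  have R : [:: a] ++ flatten (nseq n [:: b; c; a]) = flatten (nseq n [:: a; b; c]) ++ [:: a]
    := F_rot _ [:: a] [:: b; c] n.
  have E : flatten (nseq n.+1 [:: a; b; c]) ++ take 1 [:: a; b; c] =
           [:: a] ++ (flatten (nseq n [:: b; c; a]) ++ [:: b; c]) ++ [:: a].
    by rewrite F_S !catA R -!catA.
  have H2 := @rf_sandwich 3 k [:: a] _ [:: a] m 0 H (@rf_nil 3 k _ (we_sym (we_sq k a))).
  rewrite E; have := @lR_le 3 k _ _ H2.
  have -> : n.+1 + (2 <= 1) = n.+1 by rewrite addn0.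
  lia.
- have [m [H Hb]] := Glem k hk lam a b c ab bc ca.
  have := @lR_le 3 k _ _ H.
  have -> : lam + (2 <= 2) = lam.+1 by rewrite addn1.
  change (take 2 [:: a; b; c]) with [:: a; b]. move=> Hl; rewrite addn2; apply: leq_trans Hb; by rewrite leq_add2r.
- have [m [H Hb]] := Glem k hk lam a b c ab bc ca.
  have H2 := @rf_sandwich 3 k [::] _ [:: c] m 1 H (@rf_letter 3 k c).
  have E : flatten (nseq lam [:: a; b; c]) ++ take 3 [:: a; b; c] =
           [::] ++ (flatten (nseq lam [:: a; b; c]) ++ [:: a; b]) ++ [:: c].
    by rewrite cat0s -catA.
  rewrite E; have := @lR_le 3 k _ _ H2.
  have -> : lam + (2 <= 3) = lam.+1 by rewrite addn1.
  lia.
Qed.
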